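(* Let $\lambda>0$, let $\mathbf r_\lambda=(\mathbf r_{1\lambda},\dots,\mathbf r_{N\lambda})\in\mathfrak R$ be any point at which $f+\lambda g$ attains its minimum over $\mathfrak R$, write $\mathbf r_{i\lambda}=|\mathbf r_{i\lambda}|(\cos\varphi_{i\lambda},\sin\varphi_{i\lambda})$, put $\omega=\sqrt{2\lambda}$ and let $\mathbf r_\lambda(t)=(\mathbf r_{1\lambda}(t),\dots,\mathbf r_{N\lambda}(t))$ with $\mathbf r_{i\lambda}(t)=|\mathbf r_{i\lambda}|(\cos(\varphi_{i\lambda}+\omega t),\sin(\varphi_{i\lambda}+\omega t))$, $t\ge0$. Then this trajectory is stationary and periodic, and for every $t\ge 0$ and $i=1,\dots,N$, $$\frac{\partial f}{\partial \mathbf r_i}[\mathbf r_\lambda(t)]=-\lambda\frac{\partial g}{\partial \mathbf r_i}[\mathbf r_\lambda(t)],\qquad \mathbf F_i[\mathbf r_\lambda(t)]=-2\lambda m_i\mathbf r_{i\lambda}(t).$$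
   Context: Fix $N\ge 2$, masses $m_1,\dots,m_N>0$ and $\gamma>0$. Planar configuration space $\mathfrak R=\{\mathbf r=(\mathbf r_1,\dots,\mathbf r_N)\in(\mathbb R^2)^N:\ \mathbf r_i\neq\mathbf r_j \text{ for } i\neq j\}$; $f(\mathbf r)=\sum_{i<j}\frac{\gamma m_im_j}{|\mathbf r_j-\mathbf r_i|}$, $g(\mathbf r)=\sum_i m_i|\mathbf r_i|^2$; $\mathbf F_i(\mathbf r)=\sum_{j\ne i}\frac{\gamma m_im_j(\mathbf r_j-\mathbf r_i)}{|\mathbf r_j-\mathbf r_i|^3}$. For every $\lambda>0$, $f+\lambda g$ attains its minimum on $\mathfrak R$. A curve $\mathbf r(t)$, $t\ge0$, in $\mathfrak R$ is called stationary if there are constants $0<C_1\le C_2<\infty$ with $C_1\le|\mathbf r_j(t)-\mathbf r_i(t)|\le C_2$ for all $i\ne j$ and $t\ge0$. *)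

(* Defs.v *)
From Stdlib Require Import Reals Lra List Arith.
From Coquelicot Require Import Coquelicot.
Open Scope R_scope.

(* A planar configuration of N bodies: body k (k < N) sits at r k : R*R.
   Values of r at indices >= N are irrelevant. *)
Definition config := nat -> R * R.

Definition sumN (N : nat) (F : nat -> R) : R :=
  fold_right (fun k acc => F k + acc) 0 (seq 0 N).

Definition norm2 (v : R * R) : R := sqrt (fst v ^ 2 + snd v ^ 2).

Definition vsub (u v : R * R) : R * R := (fst u - fst v, snd u - snd v).

Definition dist (r : config) (i j : nat) : R := norm2 (vsub (r j) (r i)).

Definition in_config_space (N : nat) (r : config) : Prop :=
  forall i j, (i < N)%nat -> (j < N)%nat -> i <> j -> r i <> r j.

Definition fpot (N : nat) (gamma : R) (m : nat -> R) (r : config) : R :=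
  sumN N (fun i => sumN N (fun j =>
    if Nat.ltb i j then gamma * m i * m j / dist r i j else 0)).

Definition gmom (N : nat) (m : nat -> R) (r : config) : R :=
  sumN N (fun i => m i * norm2 (r i) ^ 2).

Definition Force (N : nat) (gamma : R) (m : nat -> R) (r : config) (i : nat)
  : R * R :=
  (sumN N (fun j => if Nat.eqb j i then 0 else
      gamma * m i * m j * fst (vsub (r j) (r i)) / dist r i j ^ 3),
   sumN N (fun j => if Nat.eqb j i then 0 else
      gamma * m i * m j * snd (vsub (r j) (r i)) / dist r i j ^ 3)).

Definition updx (r : config) (i : nat) (s : R) : config :=
  fun k => if Nat.eqb k i then (fst (r i) + s, snd (r i)) else r k.
Definition updy (r : config) (i : nat) (s : R) : config :=
  fun k => if Nat.eqb k i then (fst (r i), snd (r i) + s) else r k.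

Definition has_partial_i (F : config -> R) (r : config) (i : nat) : Prop :=
  ex_derive (fun s => F (updx r i s)) 0 /\ ex_derive (fun s => F (updy r i s)) 0.
Definition partial_i (F : config -> R) (r : config) (i : nat) : R * R :=
  (Derive (fun s => F (updx r i s)) 0, Derive (fun s => F (updy r i s)) 0).

Definition stationary (N : nat) (rt : R -> config) : Prop :=
  exists C1 C2, 0 < C1 /\ C1 <= C2 /\
    forall t i j, 0 <= t -> (i < N)%nat -> (j < N)%nat -> i <> j ->
      C1 <= dist (rt t) i j <= C2.

Definition periodic (N : nat) (rt : R -> config) : Prop :=
  exists T, 0 < T /\ forall t i, 0 <= t -> (i < N)%nat -> rt (t + T) i = rt t i.

(* Main.v *)
Require Import Defs.
From Stdlib Require Import Reals Lra List Arith Lia.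
From Stdlib Require Import FunctionalExtensionality.
From Coquelicot Require Import Coquelicot.
Import Defs.
Open Scope R_scope.

Lemma sumN_S n F : sumN (S n) F = sumN n F + F n.
Proof.
  unfold sumN. rewrite seq_S, fold_right_app. simpl.
  assert (forall l a, fold_right (fun k acc => F k + acc) a l = fold_right (fun k acc => F k + acc) 0 l + a).
  { induction l; intros; simpl; [ring| rewrite IHl; ring]. }
  rewrite H. ring.
Qed.
Lemma sumN_0 F : sumN 0 F = 0.
Proof. reflexivity. Qed.
Lemma sumN_ext n F G : (forall k, (k < n)%nat -> F k = G k) -> sumN n F = sumN n G.
Proof. induction n; intros H; [reflexivity|]. rewrite !sumN_S, IHn, H; auto. Qed.
Lemma sumN_plus n F G : sumN n (fun k => F k + G k) = sumN n F + sumN n G.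
Proof. induction n; [simpl; unfold sumN; simpl; ring|]. rewrite !sumN_S, IHn; ring. Qed.
Lemma sumN_zero n F : (forall k, (k < n)%nat -> F k = 0) -> sumN n F = 0.
Proof. induction n; intros H; [reflexivity|]. rewrite sumN_S, IHn, H; auto; ring. Qed.
Lemma sumN_delta n i X : (i < n)%nat -> sumN n (fun k => if Nat.eqb k i then X else 0) = X.
Proof.
  induction n; intros H; [lia|]. rewrite sumN_S.
  destruct (Nat.eq_dec i n).
  - subst. rewrite Nat.eqb_refl, sumN_zero; [ring|].
    intros k Hk. destruct (Nat.eqb_spec k n); [lia|auto].
  - rewrite IHn by lia. destruct (Nat.eqb_spec n i); [lia|ring].
Qed.
Lemma sumN_nonneg n F : (forall k, (k < n)%nat -> 0 <= F k) -> 0 <= sumN n F.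
Proof. induction n; intros H; [unfold sumN; simpl; lra|]. rewrite sumN_S.
  pose proof (H n ltac:(lia)). pose proof (IHn (fun k Hk => H k ltac:(lia))). lra. Qed.
Lemma sumN_ge n F k : (forall k, (k < n)%nat -> 0 <= F k) -> (k < n)%nat -> F k <= sumN n F.
Proof. induction n; intros H Hk; [lia|]. rewrite sumN_S.
  destruct (Nat.eq_dec k n).
  - subst. pose proof (sumN_nonneg n F (fun k Hk => H k ltac:(lia))). lra.
  - pose proof (IHn (fun k Hk => H k ltac:(lia)) ltac:(lia)). pose proof (H n ltac:(lia)). lra.
Qed.
Lemma sumN_derive n (F : nat -> R -> R) (D : nat -> R) x :
  (forall k, (k < n)%nat -> is_derive (F k) x (D k)) ->
  is_derive (fun s => sumN n (fun k => F k s)) x (sumN n D).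
Proof.
  induction n; intros H.
  - unfold sumN; simpl. auto_derive; auto.
  - rewrite sumN_S. apply (is_derive_ext (fun s => sumN n (fun k => F k s) + F n s)).
    + intros t. rewrite sumN_S. reflexivity.
    + apply is_derive_Reals.
      apply (derivable_pt_lim_plus (fun s => sumN n (fun k => F k s)) (F n)); apply is_derive_Reals; auto.
Qed.
Ltac fixsq T := repeat match goal with |- context [sqrt ?X] =>
   assert_fails (constr_eq X T); replace X with T by ring end.
Ltac fin T := assert (Hs: 0 < sqrt T) by (apply sqrt_lt_R0; lra);
  auto_derive; fixsq T; [ split; [ring_simplify; lra|split; [lra|exact I]] | field; lra ].
Lemma dA c p q w : 0 < (p - q)^2 + w^2 ->
  is_derive (fun s => c / sqrt ((p - (q + s))^2 + w^2)) 0
    (c * (p - q) / sqrt ((p-q)^2 + w^2) ^ 3).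
Proof. intros H. fin ((p-q)^2 + w^2). Qed.
Lemma dB c p q yq yp : 0 < (p - q)^2 + (yp - yq)^2 ->
  is_derive (fun s => c / sqrt ((q + s - p)^2 + (yq - yp)^2)) 0
    (c * (p - q) / sqrt ((p-q)^2 + (yp - yq)^2) ^ 3).
Proof. intros H. fin ((p-q)^2 + (yp - yq)^2). Qed.
Lemma dAy c p q w : 0 < w^2 + (p - q)^2 ->
  is_derive (fun s => c / sqrt (w^2 + (p - (q + s))^2)) 0
    (c * (p - q) / sqrt (w^2 + (p-q)^2) ^ 3).
Proof. intros H. fin (w^2 + (p-q)^2). Qed.
Lemma dBy c p q yq yp : 0 < (yp - yq)^2 + (p - q)^2 ->
  is_derive (fun s => c / sqrt ((yq - yp)^2 + (q + s - p)^2)) 0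
    (c * (p - q) / sqrt ((yp - yq)^2 + (p-q)^2) ^ 3).
Proof. intros H. fin ((yp - yq)^2 + (p-q)^2). Qed.

Lemma is_derive_eq (f : R -> R) x l l' : is_derive f x l' -> l' = l -> is_derive f x l.
Proof. intros H ->; exact H. Qed.

Lemma is_derive_cst (c x : R) : is_derive (fun _ => c) x 0.
Proof. auto_derive; auto. Qed.

Lemma sq_pos (u v : R*R) : u <> v -> 0 < (fst v - fst u)^2 + (snd v - snd u)^2.
Proof.
  intros H. destruct u as [a b], v as [c d]; cbn [fst snd].
  destruct (Rlt_or_le 0 ((c - a)^2 + (d - b)^2)) as [h|h]; auto.
  exfalso. apply H. pose proof (pow2_ge_0 (c-a)). pose proof (pow2_ge_0 (d-b)).
  assert (c = a). { destruct (Req_dec (c-a) 0); [lra|]. exfalso. pose proof (pow_nonzero _ 2 H2). lra. }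
  assert (d = b). { destruct (Req_dec (d-b) 0); [lra|]. exfalso. pose proof (pow_nonzero _ 2 H3). lra. }
  subst; reflexivity.
Qed.

Section Deriv.
Variables (N : nat) (gamma : R) (m : nat -> R) (r : config) (i : nat).
Hypothesis Hr : in_config_space N r.
Hypothesis Hi : (i < N)%nat.

Definition Tx j := gamma * m i * m j * fst (vsub (r j) (r i)) / dist r i j ^ 3.
Definition Ty j := gamma * m i * m j * snd (vsub (r j) (r i)) / dist r i j ^ 3.
Definition Dg (T : nat -> R) a b := if Nat.ltb a b then (if Nat.eqb a i then T b else if Nat.eqb b i then T a else 0) else 0.

Lemma term_dx a b : (a < N)%nat -> (b < N)%nat ->
  is_derive (fun s => if Nat.ltb a b then gamma * m a * m b / dist (updx r i s) a b else 0) 0 (Dg Tx a b).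
Proof.
  intros Ha Hb. unfold Dg. destruct (Nat.ltb_spec a b) as [hab|hab]; [|apply is_derive_cst].
  destruct (Nat.eqb_spec a i) as [->|hai].
  - assert (hbi : b <> i) by lia. pose proof (sq_pos _ _ (Hr i b Hi Hb (not_eq_sym hbi))) as P.
    eapply is_derive_ext; [|eapply is_derive_eq; [apply (dA (gamma * m i * m b) (fst (r b)) (fst (r i)) (snd (r b) - snd (r i)) P)|]].
    + intros t. unfold dist, updx, norm2, vsub. rewrite Nat.eqb_refl.
      destruct (Nat.eqb_spec b i); [lia|]. cbn [fst snd]. reflexivity.
    + unfold Tx, dist, norm2, vsub. cbn [fst snd]. reflexivity.
  - destruct (Nat.eqb_spec b i) as [->|hbi].
    + pose proof (sq_pos _ _ (Hr i a Hi Ha (not_eq_sym hai))) as P.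
      eapply is_derive_ext; [|eapply is_derive_eq; [apply (dB (gamma * m i * m a) (fst (r a)) (fst (r i)) (snd (r i)) (snd (r a)) P)|]].
      * intros t. unfold dist, updx, norm2, vsub. rewrite Nat.eqb_refl.
        destruct (Nat.eqb_spec a i); [lia|]. cbn [fst snd]. f_equal. ring.
      * unfold Tx, dist, norm2, vsub. cbn [fst snd]. reflexivity.
    + eapply is_derive_ext; [|apply (is_derive_cst (gamma * m a * m b / dist r a b))].
      intros t. unfold dist, updx.
      destruct (Nat.eqb_spec a i); [lia|]. destruct (Nat.eqb_spec b i); [lia|]. reflexivity.
Qed.

Lemma term_dy a b : (a < N)%nat -> (b < N)%nat ->
  is_derive (fun s => if Nat.ltb a b then gamma * m a * m b / dist (updy r i s) a b else 0) 0 (Dg Ty a b).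
Proof.
  intros Ha Hb. unfold Dg. destruct (Nat.ltb_spec a b) as [hab|hab]; [|apply is_derive_cst].
  destruct (Nat.eqb_spec a i) as [->|hai].
  - assert (hbi : b <> i) by lia. pose proof (sq_pos _ _ (Hr i b Hi Hb (not_eq_sym hbi))) as P.
    eapply is_derive_ext; [|eapply is_derive_eq; [apply (dAy (gamma * m i * m b) (snd (r b)) (snd (r i)) (fst (r b) - fst (r i)) P)|]].
    + intros t. unfold dist, updy, norm2, vsub. rewrite Nat.eqb_refl.
      destruct (Nat.eqb_spec b i); [lia|]. cbn [fst snd]. reflexivity.
    + unfold Ty, dist, norm2, vsub. cbn [fst snd]. reflexivity.
  - destruct (Nat.eqb_spec b i) as [->|hbi].
    + pose proof (sq_pos _ _ (Hr i a Hi Ha (not_eq_sym hai))) as P.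
      eapply is_derive_ext; [|eapply is_derive_eq; [apply (dBy (gamma * m i * m a) (snd (r a)) (snd (r i)) (fst (r i)) (fst (r a)) P)|]].
      * intros t. unfold dist, updy, norm2, vsub. rewrite Nat.eqb_refl.
        destruct (Nat.eqb_spec a i); [lia|]. cbn [fst snd]. f_equal. ring.
      * unfold Ty, dist, norm2, vsub. cbn [fst snd]. reflexivity.
    + eapply is_derive_ext; [|apply (is_derive_cst (gamma * m a * m b / dist r a b))].
      intros t. unfold dist, updy.
      destruct (Nat.eqb_spec a i); [lia|]. destruct (Nat.eqb_spec b i); [lia|]. reflexivity.
Qed.

Lemma Dg_sum T : sumN N (fun a => sumN N (fun b => Dg T a b)) =
  sumN N (fun j => if Nat.eqb j i then 0 else T j).
Proof.
  transitivity (sumN N (fun a => (if Nat.eqb a i then sumN N (fun b => if Nat.ltb i b then T b else 0) else 0)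
     + (if Nat.eqb a i then 0 else if Nat.ltb a i then T a else 0))).
  - apply sumN_ext. intros a Ha. unfold Dg. destruct (Nat.eqb_spec a i) as [->|hai].
    + rewrite Rplus_0_r. apply sumN_ext. intros b Hb. destruct (Nat.ltb i b); reflexivity.
    + rewrite Rplus_0_l. rewrite <- (sumN_delta N i (if Nat.ltb a i then T a else 0) Hi).
      apply sumN_ext. intros b Hb. destruct (Nat.eqb_spec b i) as [->|hbi]; destruct (Nat.ltb a _); reflexivity.
  - rewrite sumN_plus, sumN_delta by exact Hi. rewrite <- sumN_plus. apply sumN_ext.
    intros j Hj. destruct (Nat.eqb_spec j i); destruct (Nat.ltb_spec i j); destruct (Nat.ltb_spec j i); try lia; ring.
Qed.

Lemma fpot_dx : is_derive (fun s => fpot N gamma m (updx r i s)) 0 (fst (Force N gamma m r i)).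
Proof.
  unfold fpot. eapply is_derive_eq.
  - apply (sumN_derive N (fun a s => sumN N (fun b => if Nat.ltb a b then gamma * m a * m b / dist (updx r i s) a b else 0))).
    intros a Ha. apply (sumN_derive N (fun b s => if Nat.ltb a b then gamma * m a * m b / dist (updx r i s) a b else 0)).
    intros b Hb. apply term_dx; auto.
  - rewrite Dg_sum. reflexivity.
Qed.

Lemma fpot_dy : is_derive (fun s => fpot N gamma m (updy r i s)) 0 (snd (Force N gamma m r i)).
Proof.
  unfold fpot. eapply is_derive_eq.
  - apply (sumN_derive N (fun a s => sumN N (fun b => if Nat.ltb a b then gamma * m a * m b / dist (updy r i s) a b else 0))).
    intros a Ha. apply (sumN_derive N (fun b s => if Nat.ltb a b then gamma * m a * m b / dist (updy r i s) a b else 0)).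
    intros b Hb. apply term_dy; auto.
  - rewrite Dg_sum. reflexivity.
Qed.

Lemma gmom_dx : is_derive (fun s => gmom N m (updx r i s)) 0 (2 * m i * fst (r i)).
Proof.
  unfold gmom. eapply is_derive_eq.
  - apply (sumN_derive N (fun k s => m k * norm2 (updx r i s k) ^ 2) (fun k => if Nat.eqb k i then 2 * m i * fst (r i) else 0)).
    intros k Hk. unfold updx. destruct (Nat.eqb_spec k i) as [->|]; [|apply is_derive_cst].
    apply (is_derive_ext (fun s => m i * ((fst (r i) + s)^2 + snd (r i)^2))).
    + intros t. unfold norm2. cbn [fst snd]. rewrite pow2_sqrt.
      * reflexivity.
      * apply Rplus_le_le_0_compat; apply pow2_ge_0.
    + auto_derive; [auto|]. ring.
  - apply sumN_delta; auto.
Qed.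

Lemma gmom_dy : is_derive (fun s => gmom N m (updy r i s)) 0 (2 * m i * snd (r i)).
Proof.
  unfold gmom. eapply is_derive_eq.
  - apply (sumN_derive N (fun k s => m k * norm2 (updy r i s k) ^ 2) (fun k => if Nat.eqb k i then 2 * m i * snd (r i) else 0)).
    intros k Hk. unfold updy. destruct (Nat.eqb_spec k i) as [->|]; [|apply is_derive_cst].
    apply (is_derive_ext (fun s => m i * (fst (r i)^2 + (snd (r i) + s)^2))).
    + intros t. unfold norm2. cbn [fst snd]. rewrite pow2_sqrt.
      * reflexivity.
      * apply Rplus_le_le_0_compat; apply pow2_ge_0.
    + auto_derive; [auto|]. ring.
  - apply sumN_delta; auto.
Qed.
End Deriv.

Definition rot (th : R) (u : R * R) : R * R :=
  (fst u * cos th - snd u * sin th, snd u * cos th + fst u * sin th).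

Lemma norm2_rot th u : norm2 (rot th u) = norm2 u.
Proof.
  unfold norm2, rot; cbn [fst snd]. f_equal.
  pose proof (sin2_cos2 th) as H. unfold Rsqr in H.
  transitivity ((fst u ^ 2 + snd u ^ 2) * (sin th * sin th + cos th * cos th)); [ring|].
  rewrite H; ring.
Qed.

Lemma vsub_rot th u v : vsub (rot th u) (rot th v) = rot th (vsub u v).
Proof. unfold vsub, rot; cbn [fst snd]. f_equal; ring. Qed.

Lemma dist_rot th (r r' : config) a b : r' a = rot th (r a) -> r' b = rot th (r b) ->
  dist r' a b = dist r a b.
Proof. intros Ha Hb. unfold dist. rewrite Ha, Hb, vsub_rot, norm2_rot. reflexivity. Qed.

Lemma norm2_self u : norm2 (vsub u u) = 0.
Proof. unfold norm2, vsub. cbn [fst snd]. replace ((fst u - fst u)^2 + (snd u - snd u)^2) with 0 by ring.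
  apply sqrt_0. Qed.

Lemma dist_pos N (r : config) a b : in_config_space N r -> (a < N)%nat -> (b < N)%nat -> a <> b ->
  0 < dist r a b.
Proof. intros Hr Ha Hb Hab. unfold dist, norm2. apply sqrt_lt_R0. apply (sq_pos _ _ (Hr a b Ha Hb Hab)). Qed.

Lemma fermat (h : R -> R) l d : 0 < d -> is_derive h 0 l ->
  (forall s, -d < s < d -> h 0 <= h s) -> l = 0.
Proof.
  intros Hd H Hm. apply is_derive_Reals in H.
  change l with (derive_pt h 0 (exist _ l H)).
  apply deriv_minimum with (-d) d; try lra. intros x H1 H2. apply Hm; lra.
Qed.

Lemma dist_shift (u v : R * R) s : u = (fst v + s, snd v) \/ u = (fst v, snd v + s) ->
  norm2 (vsub u v) = Rabs s /\ norm2 (vsub v u) = Rabs s.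
Proof.
  intros [-> | ->]; unfold norm2, vsub; cbn [fst snd]; split; rewrite <- sqrt_Rsqr_abs; f_equal; unfold Rsqr; ring.
Qed.

Lemma upd_conf N (r : config) i d s : (i < N)%nat ->
  (forall a b, (a < N)%nat -> (b < N)%nat -> a <> b -> d <= dist r a b) ->
  in_config_space N r -> Rabs s < d ->
  in_config_space N (updx r i s) /\ in_config_space N (updy r i s).
Proof.
  intros Hi Hd Hr Hs. split; intros a b Ha Hb Hab Heq; unfold updx, updy in Heq;
  destruct (Nat.eqb_spec a i) as [->|hai]; destruct (Nat.eqb_spec b i) as [->|hbi]; try lia.
  - pose proof (Hd i b Hi Hb Hab). unfold dist in H. rewrite <- Heq in H.
    destruct (dist_shift (fst (r i) + s, snd (r i)) (r i) s) as [H2 _]; [left; reflexivity|]. lra.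
  - pose proof (Hd i a Hi Ha (not_eq_sym Hab)). unfold dist in H. rewrite Heq in H.
    destruct (dist_shift (fst (r i) + s, snd (r i)) (r i) s) as [H2 _]; [left; reflexivity|]. lra.
  - exact (Hr a b Ha Hb Hab Heq).
  - pose proof (Hd i b Hi Hb Hab). unfold dist in H. rewrite <- Heq in H.
    destruct (dist_shift (fst (r i), snd (r i) + s) (r i) s) as [H2 _]; [right; reflexivity|]. lra.
  - pose proof (Hd i a Hi Ha (not_eq_sym Hab)). unfold dist in H. rewrite Heq in H.
    destruct (dist_shift (fst (r i), snd (r i) + s) (r i) s) as [H2 _]; [right; reflexivity|]. lra.
  - exact (Hr a b Ha Hb Hab Heq).
Qed.

Theorem theorem3p2 (N : nat) (m : nat -> R) (gamma lambda : R)
  (rl : config) (phi : nat -> R) :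
  (2 <= N)%nat ->
  (forall i, (i < N)%nat -> 0 < m i) ->
  0 < gamma ->
  0 < lambda ->
  (* rl is a minimum point of f + lambda g on the configuration space *)
  in_config_space N rl ->
  (forall r, in_config_space N r ->
     fpot N gamma m rl + lambda * gmom N m rl <= fpot N gamma m r + lambda * gmom N m r) ->
  (* polar angles of the bodies of rl *)
  (forall i, (i < N)%nat ->
     rl i = (norm2 (rl i) * cos (phi i), norm2 (rl i) * sin (phi i))) ->
  let omega := sqrt (2 * lambda) in
  let rt : R -> config := fun t i =>
     (norm2 (rl i) * cos (phi i + omega * t), norm2 (rl i) * sin (phi i + omega * t)) in
  stationary N rt /\ periodic N rt /\
  forall t i, 0 <= t -> (i < N)%nat ->
    has_partial_i (fpot N gamma m) (rt t) i /\
    has_partial_i (gmom N m) (rt t) i /\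
    partial_i (fpot N gamma m) (rt t) i =
      (- lambda * fst (partial_i (gmom N m) (rt t) i),
       - lambda * snd (partial_i (gmom N m) (rt t) i)) /\
    Force N gamma m (rt t) i =
      (-2 * lambda * m i * fst (rt t i), -2 * lambda * m i * snd (rt t i)).
Proof.
  intros HN Hm Hg Hl Hconf Hmin Hpol omega rt.
  assert (Hom : 0 < omega) by (apply sqrt_lt_R0; lra).
  assert (Hrot : forall t i, (i < N)%nat -> rt t i = rot (omega * t) (rl i)).
  { intros t i Hi. unfold rt. pose proof (Hpol i Hi) as P. set (a := norm2 (rl i)) in *.
    rewrite P. unfold rot. cbn [fst snd]. rewrite cos_plus, sin_plus. f_equal; ring. }
  assert (Hd : forall t a b, (a < N)%nat -> (b < N)%nat -> dist (rt t) a b = dist rl a b).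
  { intros t a b Ha Hb. apply (dist_rot (omega * t)); auto. }
  assert (Hn : forall t a, (a < N)%nat -> norm2 (rt t a) = norm2 (rl a)).
  { intros t a Ha. rewrite Hrot by exact Ha. apply norm2_rot. }
  assert (Hconf_t : forall t, in_config_space N (rt t)).
  { intros t a b Ha Hb Hab Heq. pose proof (dist_pos N rl a b Hconf Ha Hb Hab) as P.
    rewrite <- (Hd t a b Ha Hb) in P. unfold dist in P. rewrite Heq, norm2_self in P. lra. }
  assert (Hmin_t : forall t r, in_config_space N r ->
     fpot N gamma m (rt t) + lambda * gmom N m (rt t) <= fpot N gamma m r + lambda * gmom N m r).
  { intros t r Hr. replace (fpot N gamma m (rt t)) with (fpot N gamma m rl).
    - replace (gmom N m (rt t)) with (gmom N m rl). { apply Hmin; exact Hr. }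
      unfold gmom. apply sumN_ext. intros k Hk. rewrite Hn; auto.
    - unfold fpot. apply sumN_ext. intros a Ha. apply sumN_ext. intros b Hb. rewrite Hd; auto. }
  set (S := sumN N (fun a => sumN N (fun b => if Nat.eqb a b then 0 else / dist rl a b))).
  set (C2 := sumN N (fun a => sumN N (fun b => dist rl a b))).
  assert (Hdnn : forall a b, 0 <= dist rl a b).
  { intros a b. unfold dist, norm2. apply sqrt_pos. }
  assert (HS : forall a b, (a < N)%nat -> (b < N)%nat -> a <> b -> / dist rl a b <= S).
  { intros a b Ha Hb Hab. unfold S.
    assert (Hnn : forall a b, (a < N)%nat -> (b < N)%nat -> 0 <= (if Nat.eqb a b then 0 else / dist rl a b)).
    { intros x y Hx Hy. destruct (Nat.eqb_spec x y); [lra|].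
      left. apply Rinv_0_lt_compat. apply (dist_pos N); auto. }
    eapply Rle_trans; [|apply (sumN_ge N _ a); auto].
    - eapply Rle_trans; [|apply (sumN_ge N _ b); auto].
      + cbv beta; destruct (Nat.eqb_spec a b); [lia|lra].
    - intros k Hk. apply sumN_nonneg. intros; auto. }
  assert (HC2 : forall a b, (a < N)%nat -> (b < N)%nat -> dist rl a b <= C2).
  { intros a b Ha Hb. unfold C2.
    eapply Rle_trans; [|apply (sumN_ge N _ a); auto].
    - eapply Rle_trans; [|apply (sumN_ge N _ b); auto]. lra.
    - intros k Hk. apply sumN_nonneg. intros; auto. }
  assert (Hd01 : 0 < dist rl 0 1) by (apply (dist_pos N); auto; lia).
  assert (HSpos : 0 < S).
  { pose proof (HS 0%nat 1%nat ltac:(lia) ltac:(lia) ltac:(lia)). pose proof (Rinv_0_lt_compat _ Hd01). lra. }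
  assert (HC1 : forall a b, (a < N)%nat -> (b < N)%nat -> a <> b -> / S <= dist rl a b).
  { intros a b Ha Hb Hab. pose proof (dist_pos N rl a b Hconf Ha Hb Hab).
    rewrite <- (Rinv_inv (dist rl a b)). apply Rinv_le_contravar.
    - apply Rinv_0_lt_compat; auto.
    - apply HS; auto. }
  split; [|split].
  - exists (/ S), C2. split; [apply Rinv_0_lt_compat; auto|]. split.
    + eapply Rle_trans; [apply (HC1 0%nat 1%nat); lia|]. apply HC2; lia.
    + intros t a b _ Ha Hb Hab. rewrite Hd by auto. split; auto.
  - exists (2 * PI / omega). split.
    + pose proof PI_RGT_0. apply Rdiv_lt_0_compat; lra.
    + intros t a _ Ha. unfold rt.
      replace (phi a + omega * (t + 2 * PI / omega)) with ((phi a + omega * t) + 2 * PI) by (field; lra).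
      rewrite (cos_plus (phi a + omega * t) (2*PI)), (sin_plus (phi a + omega * t) (2*PI)), cos_2PI, sin_2PI. f_equal; ring.
  - intros t i _ Hi.
    set (r := rt t).
    assert (Hlow : forall a b, (a < N)%nat -> (b < N)%nat -> a <> b -> / S <= dist r a b).
    { intros a b Ha Hb Hab. unfold r. rewrite Hd by auto. auto. }
    pose proof (fpot_dx N gamma m r i (Hconf_t t) Hi) as Fx.
    pose proof (fpot_dy N gamma m r i (Hconf_t t) Hi) as Fy.
    pose proof (gmom_dx N m r i Hi) as Gx.
    pose proof (gmom_dy N m r i Hi) as Gy.
    assert (Ex : fst (Force N gamma m r i) + lambda * (2 * m i * fst (r i)) = 0).
    { apply (fermat (fun s => fpot N gamma m (updx r i s) + lambda * gmom N m (updx r i s)) _ (/ S)).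
      - apply Rinv_0_lt_compat; auto.
      - apply is_derive_Reals. apply is_derive_Reals in Fx. apply is_derive_Reals in Gx.
        apply (derivable_pt_lim_plus _ (fun s => lambda * gmom N m (updx r i s))); auto.
        apply (derivable_pt_lim_scal (fun s => gmom N m (updx r i s))); auto.
      - intros s Hs. assert (Hr0 : updx r i 0 = r).
        { apply functional_extensionality. intros k. unfold updx. destruct (Nat.eqb_spec k i) as [->|]; auto.
          rewrite Rplus_0_r. destruct (r i); reflexivity. }
        rewrite Hr0. apply Hmin_t.
        apply (upd_conf N r i (/ S) s Hi Hlow (Hconf_t t)). apply Rabs_def1; lra. }
    assert (Ey : snd (Force N gamma m r i) + lambda * (2 * m i * snd (r i)) = 0).
    { apply (fermat (fun s => fpot N gamma m (updy r i s) + lambda * gmom N m (updy r i s)) _ (/ S)).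
      - apply Rinv_0_lt_compat; auto.
      - apply is_derive_Reals. apply is_derive_Reals in Fy. apply is_derive_Reals in Gy.
        apply (derivable_pt_lim_plus _ (fun s => lambda * gmom N m (updy r i s))); auto.
        apply (derivable_pt_lim_scal (fun s => gmom N m (updy r i s))); auto.
      - intros s Hs. assert (Hr0 : updy r i 0 = r).
        { apply functional_extensionality. intros k. unfold updy. destruct (Nat.eqb_spec k i) as [->|]; auto.
          rewrite Rplus_0_r. destruct (r i); reflexivity. }
        rewrite Hr0. apply Hmin_t.
        apply (upd_conf N r i (/ S) s Hi Hlow (Hconf_t t)). apply Rabs_def1; lra. }
    split; [split; eexists; eauto|].
    split; [split; eexists; eauto|].
    unfold partial_i.
    replace (Derive (fun s => fpot N gamma m (updx r i s)) 0) with (fst (Force N gamma m r i))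
      by (symmetry; apply is_derive_unique; exact Fx).
    replace (Derive (fun s => fpot N gamma m (updy r i s)) 0) with (snd (Force N gamma m r i))
      by (symmetry; apply is_derive_unique; exact Fy).
    replace (Derive (fun s => gmom N m (updx r i s)) 0) with (2 * m i * fst (r i))
      by (symmetry; apply is_derive_unique; exact Gx).
    replace (Derive (fun s => gmom N m (updy r i s)) 0) with (2 * m i * snd (r i))
      by (symmetry; apply is_derive_unique; exact Gy).
    cbn [fst snd]. split.
    + f_equal; lra.
    + rewrite (surjective_pairing (Force N gamma m r i)). f_equal; lra.
Qed.
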